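(* Let $m\ge 1$ and $n=2^m-1$. Let $C\subset F^m$ be a $1$-code containing $0^m$, and put $\dot C := C\setminus\{0^m\}$. Then the set $$P(C) := \Big( H \setminus \bigcup_{\iota\in \dot C}\big(R_\iota+ \hat{\iota} + \bar e^{(\iota)}\big)\Big) \cup \bigcup_{\iota\in \dot C}\big(R_\iota+ \hat{\iota}\big)$$ is a $1$-perfect code in $F^n$. Moreover, $$C=\{\iota\in F^m \mid (\iota,0^{n-m})\in P(C)\}.$$
   Context: $F^m$ denotes the vector space of binary $m$-tuples over $GF(2)$, and $\dot F^m := F^m\setminus\{0^m\}$. Let $\pi^{(1)}=(10\ldots0),\ldots,\pi^{(m)}=(0\ldots01)$ be the standard basis of $F^m$. The coordinates of words $\bar w\in F^n$ ($n=2^m-1$) are indexed by the elements of $\dot F^m$, $\bar w=\{w_\alpha\}_{\alpha\in\dot F^m}$, where the first $m$ coordinates have indices $\pi^{(1)},\ldots,\pi^{(m)}$ (in this order) and the remaining $n-m$ indices are in some fixed order. $\{\bar e^{(\iota)}\}_{\iota\in\dot F^m}$ is the standard basis of $F^n$ ($\bar e^{(\iota)}$ has a single $1$ in the coordinate indexed by $\iota$). For $\alpha\in F^m$, $\hat\alpha := (\alpha,0^{n-m})\in F^n$, i.e. $\hat\alpha=\sum_{i=1}^m \alpha_i \bar e^{(\pi^{(i)})}$. The Hamming code is $H:=\{\bar c\in F^n \mid \sum_{\alpha\in\dot F^m} c_\alpha\alpha = 0^m\}$. For $\iota\in\dot F^m$, $R_\iota := \{\bar c\in H \mid c_\alpha=c_{\alpha+\iota}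 \text{ for all } \alpha\in F^m\setminus\{0^m,\iota\}\}$. The Hamming distance is the number of differing positions; the neighborhood $\Omega(M)$ of $M$ is the set of words at distance at most $1$ from $M$. A set $C$ of words is a $1$-code if the neighborhoods of its elements are pairwise disjoint; a $1$-code $P\subset F^n$ is $1$-perfect if $\Omega(P)=F^n$. *)

(* Defs.v *)
From HB Require Import structures.
From mathcomp Require Import all_boot all_order all_algebra.
Set Implicit Arguments. Unset Strict Implicit. Unset Printing Implicit Defensive.
Import GRing.Theory.
Local Open Scope ring_scope.

Notation Fm m := {ffun 'I_m -> 'F_2}.
(* \dot F^m : nonzero m-tuples; they index the n = 2^m - 1 coordinates *)
Notation Fdot m := {x : Fm m | x != 0}.
Notation Word m := {ffun Fdot m -> 'F_2}.

Definition hdist (I : finType) (T : eqType) (f g : {ffun I -> T}) : nat :=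
  #|[pred i | f i != g i]|.

Definition ball (I T : finType) (x : {ffun I -> T}) : {set {ffun I -> T}} :=
  [set y | (hdist x y <= 1)%N].
Definition Omega (I T : finType) (M : {set {ffun I -> T}}) : {set {ffun I -> T}} :=
  \bigcup_(x in M) ball x.

Definition one_code (I T : finType) (C : {set {ffun I -> T}}) : Prop :=
  forall x y, x \in C -> y \in C -> x != y -> [disjoint ball x & ball y].

Definition one_perfect (I T : finType) (P : {set {ffun I -> T}}) : Prop :=
  one_code P /\ Omega P = setT.

Definition pi_ (m : nat) (i : 'I_m) : Fm m := [ffun j => (j == i)%:R].

(* coordinate w_alpha, extended by w_0 := 0 for alpha = 0 (only used for alpha != 0) *)
Definition coord (m : nat) (w : Word m) (a : Fm m) : 'F_2 :=
  if insub a is Some b then w b else 0.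

Definition e_ (m : nat) (iota : Fm m) : Word m := [ffun b => (val b == iota)%:R].

(* hat alpha = (alpha, 0^{n-m}) = sum_i alpha_i e^(pi^(i)) *)
Definition hat (m : nat) (a : Fm m) : Word m :=
  \sum_(i < m) [ffun b => a i * e_ (pi_ i) b].

Definition Hamming (m : nat) : {set Word m} :=
  [set c : Word m | [ffun j => \sum_(a : Fdot m) c a * val a j] == 0].

Definition Rset (m : nat) (iota : Fm m) : {set Word m} :=
  [set c in Hamming m | [forall a : Fm m,
      (a != 0) && (a != iota) ==> (coord c a == coord c (a + iota))]].

Definition shift (m : nat) (M : {set Word m}) (v : Word m) : {set Word m} :=
  [set (c + v : Word m) | c : Word m in M].

Definition PC (m : nat) (C : {set Fm m}) : {set Word m} :=
  let Cd := C :\ (0 : Fm m) in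
  (Hamming m :\: \bigcup_(iota in Cd) shift (Rset iota) (hat iota + e_ iota))
  :|: \bigcup_(iota in Cd) shift (Rset iota) (hat iota).

(* Main.v *)
Require Import Defs.
From mathcomp Require Import all_boot all_order all_algebra.
Import GRing.Theory.
Local Open Scope ring_scope.
Set Implicit Arguments. Unset Strict Implicit.
Notation coord := Defs.coord.

Lemma F2c (a : 'F_2) : a = 0 \/ a = 1.
Proof. by case: a => [[|[|i]] Hi] //=; [left|right]; apply/val_inj. Qed.
Lemma F2xx (a : 'F_2) : a + a = 0.
Proof. by case: (F2c a) => ->; apply/val_inj. Qed.
Lemma F2neq (a b : 'F_2) : a != b -> b = a + 1.
Proof. by case: (F2c a) => ->; case: (F2c b) => -> //; rewrite ?eqxx // => _; apply/val_inj. Qed.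
Lemma F2add1 (a : 'F_2) : (a + 1 != 0) = (a == 0).
Proof. by case: (F2c a) => ->. Qed.
Lemma F2opp (a : 'F_2) : - a = a.
Proof. by rewrite -[LHS]add0r -(F2xx a) addrK. Qed.
Lemma F2n0 (a : 'F_2) : a != 0 -> a = 1.
Proof. by case: (F2c a) => ->. Qed.

Section Gen.
Variable I : finType.
Implicit Types x y z : {ffun I -> 'F_2}.
Lemma addvv x : x + x = 0.
Proof. by apply/ffunP => i; rewrite !ffunE F2xx. Qed.
Lemma oppv x : - x = x.
Proof. by rewrite -[LHS]add0r -(addvv x) addrK. Qed.
Lemma addvK x y : x + y + y = x.
Proof. by rewrite -addrA addvv addr0. Qed.
Lemma addv_eq x y z : (x + y == z) = (x == z + y).
Proof. by rewrite -{1}(oppv y) subr_eq. Qed.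
Lemma addv_eq2 x y z : (x + z == y + z) = (x == y).
Proof. exact: (inj_eq (addIr z)). Qed.

Definition unit (b : I) : {ffun I -> 'F_2} := [ffun i => (i == b)%:R].
Definition eo (o : option I) : {ffun I -> 'F_2} :=
  if o is Some b then unit b else 0.

Lemma ballP x y : reflect (exists o, y = x + eo o) (y \in ball x).
Proof.
rewrite inE /hdist; apply: (iffP idP).
  case: (pickP [pred i | x i != y i]) => [b Db|D0] Hc.
    exists (Some b); apply/ffunP => i; rewrite /= !ffunE.
    have [->|nib] := eqVneq i b; first by move: Db; rewrite inE => /F2neq.
    have : i \notin [pred i | x i != y i].
      apply/negP => Di; move/card_le1_eqP: Hc => /(_ i b Di Db) eib.
      by rewrite eib eqxx in nib.
    by rewrite inE negbK => /eqP ->; rewrite addr0.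
  by exists None; apply/ffunP => i; rewrite /= addr0; have := D0 i; rewrite /= => /negbFE/eqP.
case=> [[b|]] ->.
  apply: (leq_trans (subset_leq_card (B := pred1 b) _)); last by rewrite card1.
  apply/subsetP => i; rewrite !inE !ffunE; have [//|nib] := eqVneq i b.
  by rewrite addr0 eqxx.
by rewrite (eq_card0 (A := [pred i | x i != (x + eo None) i])) // => i; rewrite !inE /= addr0 eqxx.
Qed.

Lemma ball_shift x z v : z \in ball x -> z + v \in ball (x + v).
Proof. by case/ballP => o ->; apply/ballP; exists o; rewrite addrAC. Qed.
End Gen.

Section Words.
Variable m : nat.
Implicit Types (x y z v w : Word m) (a : Fm m).

Definition syn w : Fm m := [ffun j => \sum_(a : Fdot m) w a * val a j].
Lemma inH w : (w \in Hamming m) = (syn w == 0).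
Proof. by rewrite inE. Qed.
Lemma synD x y : syn (x + y) = syn x + syn y.
Proof.
by apply/ffunP => j; rewrite !ffunE -big_split; apply: eq_bigr => a _; rewrite ffunE mulrDl.
Qed.
Lemma syn0 : syn 0 = 0.
Proof. by apply: (addIr (syn 0)); rewrite -synD !add0r. Qed.
Lemma syn_u (b : Fdot m) : syn (unit b) = val b.
Proof.
apply/ffunP => j; rewrite ffunE (bigD1 b) //= ffunE eqxx mul1r big1 ?addr0 //.
by move=> a /negbTE; rewrite ffunE => ->; rewrite mul0r.
Qed.
Lemma pi_neq0 (i : 'I_m) : pi_ i != 0.
Proof. by apply/eqP => /ffunP /(_ i); rewrite !ffunE eqxx. Qed.

Lemma sumFdot (p : Fm m) (g : Fm m -> 'F_2) : p != 0 ->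
  \sum_(b : Fdot m) (val b == p)%:R * g (val b) = g p.
Proof.
move=> Hp; rewrite (bigD1 (Sub p Hp : Fdot m)) //= eqxx mul1r big1 ?addr0 //.
move=> b nb; suff /negbTE -> : val b != p by rewrite mul0r.
by apply: contra nb => /eqP e; apply/eqP/val_inj; rewrite SubK.
Qed.

Lemma e_unit (io : Fm m) (H : io != 0) : e_ io = unit (Sub io H : Fdot m).
Proof. by apply/ffunP => b; rewrite /unit !ffunE. Qed.
Lemma syn_e (io : Fm m) : io != 0 -> syn (e_ io) = io.
Proof. by move=> H; rewrite (e_unit H) syn_u SubK. Qed.

Lemma hatE a : hat a = [ffun b : Fdot m => \sum_(i < m) a i * (val b == pi_ i)%:R].
Proof.
by apply/ffunP => b; rewrite /hat sum_ffunE ffunE; apply: eq_bigr => i _; rewrite !ffunE.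
Qed.
Lemma syn_hat a : syn (hat a) = a.
Proof.
apply/ffunP => j; rewrite hatE ffunE.
under eq_bigr do rewrite ffunE mulr_suml.
rewrite exchange_big /=.
under eq_bigr => i _.
  under eq_bigr do rewrite -mulrA.
  rewrite -mulr_sumr (@sumFdot (pi_ i) (fun v : Fm m => v j) (pi_neq0 i)).
  over.
rewrite (bigD1 j) //= big1 ?addr0; first by rewrite ffunE eqxx mulr1.
by move=> i nij; rewrite ffunE eq_sym (negbTE nij) mulr0.
Qed.

Lemma coordD x y a : coord (x + y) a = coord x a + coord y a.
Proof. by rewrite /coord; case: (insub a) => [b|]; rewrite ?ffunE ?addr0. Qed.
Lemma coord0 a : coord 0 a = 0.
Proof. by rewrite /coord; case: (insub a) => [b|]; rewrite ?ffunE. Qed.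
Lemma coord_val (G : Fm m -> 'F_2) a : G 0 = 0 ->
  coord [ffun b : Fdot m => G (val b)] a = G a.
Proof.
by move=> G0; rewrite /coord; case: insubP => [b _ <-|/negPn/eqP->]; rewrite ?ffunE.
Qed.
Lemma coord_u (b : Fdot m) a : coord (unit b) a = (a == val b)%:R.
Proof.
rewrite /coord; case: insubP => [b' _ <-|/negPn/eqP->]; rewrite ?ffunE ?val_eqE //.
by rewrite eq_sym (negbTE (valP b)).
Qed.
Lemma coord_e (io : Fm m) a : io != 0 -> coord (e_ io) a = (a == io)%:R.
Proof. by move=> H; rewrite (e_unit H) coord_u SubK. Qed.
Lemma coord_hat (p : Fm m) a : coord (hat p) a = \sum_(i < m) p i * (a == pi_ i)%:R.
Proof.
rewrite hatE (coord_val (G := fun t : Fm m => \sum_(i < m) p i * (t == pi_ i)%:R)) //.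
by apply: big1 => i _; rewrite eq_sym (negbTE (pi_neq0 i)) mulr0.
Qed.
End Words.

Section W2.
Variable m : nat.
Implicit Types (x y z v w : Word m) (a io p : Fm m) (S : pred (Fm m)).

Lemma RP io c : reflect (syn c = 0 /\
   forall a, a != 0 -> a != io -> coord c a = coord c (a + io)) (c \in Rset io).
Proof.
rewrite !inE; apply: (iffP andP) => [[/eqP H /forallP F]|[H F]]; split => //.
- by move=> a a0 ai; apply/eqP/(implyP (F a)); rewrite a0 ai.
- by apply/eqP.
- by apply/forallP => a; apply/implyP => /andP[a0 ai]; apply/eqP; exact: F.
Qed.
Lemma R0 io : 0 \in Rset io.
Proof. by apply/RP; split; [exact: syn0 | move=> *; rewrite !coord0]. Qed.
Lemma RD io x y : x \in Rset io -> y \in Rset io -> x + y \in Rset io.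
Proof.
move=> /RP[Hx Fx] /RP[Hy Fy]; apply/RP; split; first by rewrite synD Hx Hy addr0.
by move=> a a0 ai; rewrite !coordD (Fx a a0 ai) (Fy a a0 ai).
Qed.
Lemma Rg io (H : io != 0) (b b' : Fdot m) : val b != io -> val b' = val b + io ->
  unit b + unit b' + e_ io \in Rset io.
Proof.
move=> nb eb; apply/RP; split.
  by rewrite !synD !syn_u syn_e // eb addrA addvv add0r addvv.
move=> a a0 ai; rewrite !coordD !coord_u !coord_e // eb !addv_eq addvK addvv.
by rewrite (negbTE a0) (negbTE ai) !addr0 addrC.
Qed.

Lemma Hcode x y z : syn x = 0 -> syn y = 0 -> z \in ball x -> z \in ball y -> x = y.
Proof.
move=> Hx Hy /ballP[o ->] /ballP[o' e].
have := congr1 (@syn m) e; rewrite !synD Hx Hy !add0r.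
move: e; case: o => [b|]; case: o' => [b'|] /= e; rewrite ?syn_u ?syn0 => h.
- by move: e; rewrite (val_inj h) => /addIr.
- by move: (valP b); rewrite h eqxx.
- by move: (valP b'); rewrite -h eqxx.
- by move: e; rewrite !addr0.
Qed.

Lemma transfer io v x z : io != 0 -> x + v \in Rset io -> z \in ball x ->
  exists2 x', x' + (v + e_ io) \in Rset io & z \in ball x'.
Proof.
move=> H Rx /ballP [o ->]; rewrite (e_unit H); set ib := (Sub io H : Fdot m).
have key : x + unit ib + (v + unit ib) = x + v by rewrite addrACA addvv addr0.
case: o => [b|] /=.
- have [->|nb] := eqVneq b ib.
  + exists (x + unit ib); first by rewrite key.
    by apply/ballP; exists None; rewrite addr0.
  + have nbv : val b != io.
      by apply: contra nb => /eqP e; apply/eqP/val_inj; rewrite e /ib SubK.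
    have Hb' : val b + io != 0 by rewrite addr_eq0 oppv.
    pose b' := (Sub (val b + io) Hb' : Fdot m).
    exists (x + unit b + unit b').
      have -> : x + unit b + unit b' + (v + unit ib) =
                (x + v) + (unit b + unit b' + unit ib).
        by rewrite -!addrA; congr (_ + _); rewrite [unit b' + _]addrCA addrCA.
      rewrite /ib -(e_unit H); apply: RD Rx (Rg H nbv _).
      by rewrite /b' SubK.
    by apply/ballP; exists (Some b'); rewrite /= addvK.
- exists (x + unit ib); first by rewrite key.
  by apply/ballP; exists (Some ib); rewrite /= addvK addr0.
Qed.

Definition FS (S : pred (Fm m)) w : 'F_2 := \sum_(a | S a) coord w a.
Lemma FSD S x y : FS S (x + y) = FS S x + FS S y.
Proof. by rewrite /FS -big_split; apply: eq_bigr => a _; rewrite coordD. Qed.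
Lemma FS0 S : FS S 0 = 0.
Proof. by rewrite /FS big1 // => a _; rewrite coord0. Qed.
Lemma sum_pred1 (S : pred (Fm m)) p : \sum_(a | S a) ((a == p)%:R : 'F_2) = (S p)%:R.
Proof.
case Sp: (S p).
  by rewrite (bigD1 p) //= eqxx big1 ?addr0 // => a /andP[_ /negbTE ->].
by rewrite big1 // => a Sa; case: eqP => // e; rewrite -e Sa in Sp.
Qed.
Lemma FS_e S io : io != 0 -> FS S (e_ io) = (S io)%:R.
Proof. by move=> H; rewrite /FS; under eq_bigr do rewrite coord_e //; rewrite sum_pred1. Qed.
Lemma FS_hat S p : FS S (hat p) = \sum_(i < m) p i * (S (pi_ i))%:R.
Proof.
rewrite /FS; under eq_bigr do rewrite coord_hat.
by rewrite exchange_big; apply: eq_bigr => i _; rewrite -mulr_sumr sum_pred1.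
Qed.

Lemma FS_kill io S c : io != 0 -> (forall a, S a -> S (a + io)) -> ~~ S 0 -> ~~ S io ->
  c \in Rset io -> FS S c = 0.
Proof.
move=> H cl S0 Si /RP [_ Rc].
have [j ij] : exists j, io j != 0.
  case: (pickP (fun j => io j != 0)) => [j|none]; first by exists j.
  by move/eqP: H; case; apply/ffunP => j; move: (none j) => /negbFE /eqP ->; rewrite ffunE.
have ij1 := F2n0 ij.
have clS a : S (a + io) = S a.
  by apply/idP/idP => /cl //; rewrite addvK.
rewrite /FS (bigID (fun a => a j == 0)) /=.
rewrite [X in _ + X](reindex_inj (addIr io)) /=.
have -> : \sum_(a : Fm m | S (a + io) && ~~ ((a + io) j == 0)) coord c (a + io) =
          \sum_(a : Fm m | S a && (a j == 0)) coord c (a + io).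
  by apply: eq_bigl => a; rewrite clS ffunE ij1 F2add1.
rewrite -big_split big1 // => a /andP[Sa _].
have a0 : a != 0 by apply/eqP => e; move: Sa; rewrite e (negbTE S0).
have ai : a != io by apply/eqP => e; move: Sa; rewrite e (negbTE Si).
by rewrite -(Rc a a0 ai); exact: F2xx.
Qed.

End W2.

Section W3.
Variable m : nat.
Implicit Types (w : Word m) (a i k io p : Fm m) (S : pred (Fm m)) (x j : 'I_m).

Definition Vp i k : pred (Fm m) := fun t : Fm m => [|| t == 0, t == i, t == k | t == i + k].
Lemma Vcl_i i k t : Vp i k t -> Vp i k (t + i).
Proof.
rewrite /Vp => /or4P[]/eqP->.
- by rewrite add0r eqxx orbT.
- by rewrite addvv eqxx.
- by rewrite (addrC k) eqxx !orbT.
- by rewrite addrAC addvv add0r eqxx !orbT.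
Qed.
Lemma Vcl_k i k t : Vp i k t -> Vp i k (t + k).
Proof.
rewrite /Vp => /or4P[]/eqP->.
- by rewrite add0r eqxx !orbT.
- by rewrite eqxx !orbT.
- by rewrite addvv eqxx.
- by rewrite addvK eqxx !orbT.
Qed.
Lemma Vsym i k t : Vp k i t = Vp i k t.
Proof.
rewrite /Vp (addrC k); case: (t == 0) => //=; case: (t == i); case: (t == k) => //=.
Qed.

Definition far (u : Fm m) := forall x y : 'I_m, u != pi_ x /\ u != pi_ x + pi_ y.
Definition NV i k := forall u, Vp i k u -> u = 0 \/ far u.

Lemma piV i k j : NV i k -> ~~ Vp i k (pi_ j).
Proof.
move=> N; apply/negP => /N [e | F]; first by move: (pi_neq0 j); rewrite e eqxx.
by case: (F j j); rewrite eqxx.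
Qed.
Lemma pi2V i k x j : NV i k -> x != j -> ~~ Vp i k (pi_ x + pi_ j).
Proof.
move=> N nxj; apply/negP => /N [/ffunP/(_ x) | F].
  by rewrite !ffunE eqxx (negbTE nxj) addr0.
by case: (F x j); rewrite eqxx.
Qed.

Lemma FS_K1 i k j w : i != 0 -> NV i k -> w + (hat i + e_ i) \in Rset i ->
  FS (fun a => Vp i k (a + pi_ j)) w = i j.
Proof.
move=> H N Rw.
set S := fun a => _.
have Spi x : S (pi_ x) = (x == j).
  rewrite /S; have [->|nxj] := eqVneq x j; first by rewrite addvv /Vp eqxx.
  exact/negbTE/pi2V.
have Si : ~~ S i.
  rewrite /S; apply/negP => /Vcl_i; rewrite addrAC addvv add0r; exact/negP/piV.
have S0 : ~~ S 0 by rewrite /S add0r piV.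
have cl a : S a -> S (a + i) by rewrite /S addrAC; exact: Vcl_i.
have := FS_kill H cl S0 Si Rw; rewrite !FSD FS_hat FS_e // (negbTE Si).
rewrite (bigD1 j) //= Spi eqxx big1; last first.
  by move=> x nx; rewrite Spi (negbTE nx) mulr0.
by rewrite mulr1 !addr0 => /eqP; rewrite addr_eq0 F2opp => /eqP.
Qed.
End W3.

Section W4.
Variable m : nat.
Variable C : {set Fm m}.
Hypothesis HC : one_code C.
Hypothesis C0 : (0 : Fm m) \in C.
Implicit Types (x y z v w : Word m) (a i k io p : Fm m).

Lemma Cfact i k : i \in C -> k \in C -> i != k -> far (i + k).
Proof.
move=> Ci Ck nik x' y'; have D := HC Ci Ck nik.
have bx (u : Fm m) t : u + pi_ t \in ball u by apply/ballP; exists (Some t).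
split; apply/eqP => e.
- have ey : i = k + pi_ x' by rewrite -e addrCA addvv addr0.
  have ii : i \in ball i by apply/ballP; exists None; rewrite addr0.
  by move: (disjointFr D ii); rewrite {1}ey bx.
- have ek : k = i + (pi_ x' + pi_ y') by rewrite -e addrA addvv add0r.
  have ez : i + pi_ x' = k + pi_ y' by rewrite ek addrA addvK.
  by move: (disjointFr D (bx i x')); rewrite ez bx.
Qed.

Lemma NVC i k : i \in C -> k \in C -> NV i k.
Proof.
move=> Ci Ck.
have far' (x y : Fm m) : x \in C -> y \in C -> x + y = 0 \/ far (x + y).
  move=> Cx Cy; case: (eqVneq x y) => [->|n]; [left; exact: addvv | right; exact: Cfact].
move=> u /or4P[]/eqP->; [by left | | | by apply: far'].
- by rewrite -[i]addr0; apply: far'.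
- by rewrite -[k]addr0; apply: far'.
Qed.

Lemma shiftP (M : {set Word m}) v x : (x \in shift M v) = (x + v \in M).
Proof.
apply/imsetP/idP => [[c Mc ->]|Mx]; first by rewrite addvK.
by exists (x + v); rewrite ?addvK.
Qed.

Lemma PC_H x : syn x = 0 ->
  (forall io, io \in C -> io != 0 -> x + (hat io + e_ io) \notin Rset io) -> x \in PC C.
Proof.
move=> Hx nK; rewrite /PC inE; apply/orP; left; apply/setDP; split.
  by rewrite inH Hx.
apply/bigcupP => -[io]; rewrite !inE => /andP[n0 Cio]; rewrite shiftP.
by apply/negP; apply: nK.
Qed.

Lemma PC_L x io : io \in C -> io != 0 -> x + hat io \in Rset io -> x \in PC C.
Proof.
move=> Cio n0 R; rewrite /PC inE; apply/orP; right; apply/bigcupP; exists io.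
  by rewrite !inE n0 Cio.
by rewrite shiftP.
Qed.

Lemma PC_elim x : x \in PC C ->
  (syn x = 0 /\ forall io, io \in C -> io != 0 -> x + (hat io + e_ io) \notin Rset io)
  \/ (exists io, [/\ io \in C, io != 0 & x + hat io \in Rset io]).
Proof.
rewrite /PC inE => /orP[/setDP[Hx nK]|/bigcupP[io Cio Rx]].
  left; split; first by move: Hx; rewrite inH => /eqP.
  move=> io Cio n0; apply: contra nK => Rx; apply/bigcupP; exists io.
    by rewrite !inE n0 Cio.
  by rewrite shiftP.
right; exists io; rewrite !inE in Cio; case/andP: Cio => n0 Cio; split => //.
by rewrite shiftP in Rx.
Qed.

Lemma nz_coord io : io != 0 -> exists j, io j != 0.
Proof.
move=> H; case: (pickP (fun j => io j != 0)) => [j|none]; first by exists j.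
by move/eqP: H; case; apply/ffunP => j; move: (none j) => /negbFE /eqP ->; rewrite ffunE.
Qed.

Lemma KH io w : io != 0 -> w + (hat io + e_ io) \in Rset io -> syn w = 0.
Proof.
move=> n0 /RP[Hs _]; move: Hs; rewrite !synD syn_hat syn_e // addvv addr0 //.
Qed.

Lemma Kdisj i k w : i \in C -> k \in C -> i != 0 -> k != 0 ->
  w + (hat i + e_ i) \in Rset i -> w + (hat k + e_ k) \in Rset k -> i = k.
Proof.
move=> Ci Ck ni nk Ri Rk; apply/ffunP => j.
rewrite -(FS_K1 j ni (NVC Ci Ck) Ri) -(FS_K1 j nk (NVC Ck Ci) Rk).
by rewrite /FS; apply: eq_bigl => a; rewrite Vsym.
Qed.

Lemma Znot k : k \in C -> k != 0 -> 0 + (hat k + e_ k) \notin Rset k.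
Proof.
move=> Ck nk; apply/negP => R; have [j kj] := nz_coord nk.
have := FS_K1 j nk (NVC Ck Ck) R; rewrite FS0 => e.
by move: kj; rewrite -e eqxx.
Qed.

Lemma HL x y z io : syn x = 0 ->
  (forall io, io \in C -> io != 0 -> x + (hat io + e_ io) \notin Rset io) ->
  io \in C -> io != 0 -> y + hat io \in Rset io -> z \in ball x -> z \in ball y -> False.
Proof.
move=> Hx nK Cio n0 Ry zx zy.
have [y' Ry' zy'] := transfer n0 Ry zy.
move: (nK io Cio n0); rewrite (Hcode Hx (KH n0 Ry') zx zy') Ry'.
by [].
Qed.

Lemma key x y z : x \in PC C -> y \in PC C -> z \in ball x -> z \in ball y -> x = y.
Proof.
move=> /PC_elim [[Hx nKx]|[io [Cio n0 Rx]]] /PC_elim [[Hy nKy]|[ko [Cko nk Ry]]] zx zy.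
- exact: Hcode Hx Hy zx zy.
- by case: (HL Hx nKx Cko nk Ry zx zy).
- by case: (HL Hy nKy Cio n0 Rx zy zx).
have [x' Rx' zx'] := transfer n0 Rx zx.
have [y' Ry' zy'] := transfer nk Ry zy.
have exy := Hcode (KH n0 Rx') (KH nk Ry') zx' zy'.
rewrite exy in Rx'; have eik := Kdisj Cio Cko n0 nk Rx' Ry'.
rewrite -eik in Ry.
have sh u : u + hat io \in Rset io -> syn (u + e_ io) = 0.
  move=> Ru; apply: (KH n0); by rewrite addrACA addvv addr0.
apply: (addIr (e_ io)).
exact: Hcode (sh _ Rx) (sh _ Ry) (ball_shift _ zx) (ball_shift _ zy).
Qed.

Lemma hat0 : hat (0 : Fm m) = 0.
Proof.
by apply/ffunP => b; rewrite hatE !ffunE big1 // => i _; rewrite ffunE mul0r.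
Qed.

End W4.

Theorem mainTheorem1 (m : nat) (C : {set Fm m}) :
  (1 <= m)%N -> one_code C -> (0 : Fm m) \in C ->
  one_perfect (PC C) /\ C = [set iota : Fm m | hat iota \in PC C].
Proof.
move=> _ HC C0; split; [split|].
- move=> x y Px Py nxy; rewrite disjoint_subset; apply/subsetP => z zx.
  rewrite inE; apply/negP => zy.
  by move: nxy; rewrite (key HC C0 Px Py zx zy) eqxx.
- apply/setP => z; rewrite inE; apply/bigcupP.
  have [c Hc zc] : exists2 c : Word m, syn c = 0 & z \in ball c.
    case: (eqVneq (syn z) 0) => [s0|sn].
      by exists z => //; apply/ballP; exists None; rewrite addr0.
    exists (z + unit (Sub (syn z) sn : Fdot m)).
      by rewrite synD syn_u SubK addvv.
    by apply/ballP; exists (Some (Sub (syn z) sn : Fdot m)); rewrite /= addvK.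
  case: (pickP (fun io : Fm m => (io \in C) && (io != 0) &&
                 (c + (hat io + e_ io) \in Rset io))) => [io /andP[/andP[Cio n0] Rc] | none].
    have [x' Rx' zx'] := transfer n0 Rc zc.
    exists x' => //; apply: (PC_L Cio n0).
    by move: Rx'; rewrite -addrA addvv addr0.
  exists c => //; apply: PC_H => // io Cio n0.
  by move: (none io); rewrite Cio n0 /= => ->.
- apply/setP => io; rewrite inE; case: (eqVneq io 0) => [->|n0].
    rewrite C0; symmetry; rewrite hat0; apply: PC_H; first exact: syn0.
    move=> ko Cko nk; exact: (Znot HC C0 Cko nk).
  case Cio: (io \in C).
    by symmetry; apply: (PC_L Cio n0); rewrite addvv; exact: R0.
  symmetry; apply/negbTE/negP => /PC_elim [[sh _]|[ko [Cko nk Rk]]].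
    by move: n0; rewrite -sh syn_hat eqxx.
  move/RP: Rk => [Hs _]; move: Hs; rewrite synD !syn_hat => /eqP.
  rewrite addr_eq0 oppv => /eqP e; move: Cio; rewrite e Cko.
  by [].
Qed.
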